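(* Let $Q_{1}=(Q_{1,i})_{i\in[d]}$ and $Q_{2}=(Q_{2,i})_{i\in[d]}$ be nonnegative vectors with $Q_{1,i}+Q_{2,i}>0$ for all $i\in[d]$, let $I_0\subset[d]$ be the largest reference set (so that $Q_{1,i}=bQ_{2,i}$ for all $i\in I_0$ for some $b>0$, and every $i\notin I_0$ is differential with respect to $I_0$), and let $I_1=[d]\setminus I_0$. Run the following iterative procedure: set $U_{(0)}=\emptyset$, $V_{(0)}=[d]$; for $t=0,1,\ldots$, (a) compute $M(V_{(t)})=\mathrm{Median}\{R_i(V_{(t)}):i\in V_{(t)}\}$; (b) set $W_{(t)}=W^{+}(V_{(t)})\cup W^{-}(V_{(t)})$ if $M(V_{(t)})=0$, $W_{(t)}=W^{-}(V_{(t)})\cup W^{o}(V_{(t)})$ if $M(V_{(t)})>0$, and $W_{(t)}=W^{+}(V_{(t)})\cup W^{o}(V_{(t)})$ if $M(V_{(t)})<0$; (c) set $U_{(t+1)}=U_{(t)}\cup W_{(t)}$, $V_{(t+1)}=V_{(t)}\setminus W_{(t)}$, and stop if $W_{(t)}=\emptyset$. Let $T$ be the iteration at which the loop stops, and set $\hat I_0=V_{(T)}$, $\hat I_1=U_{(T)}$. If $|I_0|>d/2$, then $$T\le |I_1|+1,\qquad \hat I_0=I_0,\qquad \hat I_1=I_1.$$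
   Context: $[d]=\{1,\ldots,d\}$. $Q_{k,i}$ denotes the (known) expected relative abundance of component $i$ in population $k\in\{1,2\}$. A subset $I_0\subset[d]$ is a reference set if there exists $b>0$ with $Q_{1,i}=bQ_{2,i}$ for all $i\in I_0$; component $i$ is differential with respect to $I_0$ if $Q_{1,i}/\sum_{i'\in I_0}Q_{1,i'}\ne Q_{2,i}/\sum_{i'\in I_0}Q_{2,i'}$. For $I\subset[d]$ and $i\in I$, $R_i(I)=Q_{1,i}/\sum_{i'\in I}Q_{1,i'}-Q_{2,i}/\sum_{i'\in I}Q_{2,i'}$, and $W^{+}(I)=\{i\in I:R_i(I)>0\}$, $W^{-}(I)=\{i\in I:R_i(I)<0\}$, $W^{o}(I)=\{i\in I:R_i(I)=0\}$. *)

(* Defs.v *)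
From HB Require Import structures.
From mathcomp Require Import all_boot all_order all_algebra.
Set Implicit Arguments. Unset Strict Implicit. Unset Printing Implicit Defensive.
Import Order.TTheory GRing.Theory Num.Theory.
Local Open Scope ring_scope.

Section Defs.
Variables (R : realFieldType) (d : nat) (Q1 Q2 : 'I_d -> R).

Definition reference_set (I0 : {set 'I_d}) : Prop :=
  exists2 b : R, 0 < b & forall i, i \in I0 -> Q1 i = b * Q2 i.

Definition differential (I0 : {set 'I_d}) (i : 'I_d) : Prop :=
  Q1 i / (\sum_(j in I0) Q1 j) != Q2 i / (\sum_(j in I0) Q2 j).

Definition Rval (I : {set 'I_d}) (i : 'I_d) : R :=
  Q1 i / (\sum_(j in I) Q1 j) - Q2 i / (\sum_(j in I) Q2 j).

Definition Wplus (I : {set 'I_d}) : {set 'I_d} := [set i in I | 0 < Rval I i].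
Definition Wminus (I : {set 'I_d}) : {set 'I_d} := [set i in I | Rval I i < 0].
Definition Wzero (I : {set 'I_d}) : {set 'I_d} := [set i in I | Rval I i == 0].

Definition median (s : seq R) : R :=
  let t := sort <=%R s in
  let n := size t in
  if n == 0%N then 0
  else if odd n then nth 0 t n./2
  else (nth 0 t n./2.-1 + nth 0 t n./2) / 2%:R.

Definition Mval (V : {set 'I_d}) : R := median [seq Rval V i | i <- enum V].

Definition Wset (V : {set 'I_d}) : {set 'I_d} :=
  if Mval V == 0 then Wplus V :|: Wminus V
  else if 0 < Mval V then Wminus V :|: Wzero V
  else Wplus V :|: Wzero V.

Definition step (UV : {set 'I_d} * {set 'I_d}) : {set 'I_d} * {set 'I_d} :=
  let W := Wset UV.2 in (UV.1 :|: W, UV.2 :\: W).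

Definition UVt (t : nat) : {set 'I_d} * {set 'I_d} := iter t step (set0, setT).

End Defs.

(* Main.v *)
Require Import Defs.
From HB Require Import structures.
From mathcomp Require Import all_boot all_order all_algebra.
From mathcomp Require Import zify ring lra.
Import Order.TTheory GRing.Theory Num.Theory.
Local Open Scope ring_scope.
Set Implicit Arguments. Unset Strict Implicit.


Lemma sorted_count_up {R : realFieldType} (s : seq R) (P : pred R)
  (Pup : forall x y, x <= y -> P x -> P y) i :
  sorted <=%R s -> (i < size s)%N -> ~~ P (nth 0 s i) ->
  (count P s <= size s - i.+1)%N.
Proof.
move=> ss lti nP.
rewrite -[in count _ _](cat_take_drop i.+1 s) count_cat.
have -> : count P (take i.+1 s) = 0%N.
  apply/eqP; rewrite -leqn0 leqNgt -has_count; apply/hasPn => x.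
  move=> /(nthP 0) [j]; rewrite size_take => ltj <-.
  have lji : (j <= i)%N by move: ltj; case: ifP => h; lia.
  rewrite nth_take //; apply: contra nP; apply: Pup.
  apply: (sorted_leq_nth le_trans lexx) => //.
  exact: leq_ltn_trans lji lti.
by rewrite add0n -size_drop count_size.
Qed.

Lemma sorted_count_down {R : realFieldType} (s : seq R) (P : pred R)
  (Pdn : forall x y, x <= y -> P y -> P x) i :
  sorted <=%R s -> (i < size s)%N -> ~~ P (nth 0 s i) ->
  (count P s <= i)%N.
Proof.
move=> ss lti nP.
rewrite -[in count _ _](cat_take_drop i s) count_cat.
have -> : count P (drop i s) = 0%N.
  apply/eqP; rewrite -leqn0 leqNgt -has_count; apply/hasPn => x.
  move=> /(nthP 0) [j]; rewrite size_drop => ltj <-.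
  rewrite nth_drop; apply: contra nP; apply: Pdn.
  apply: (sorted_leq_nth le_trans lexx) => //; rewrite ?leq_addr //.
  by move: ltj; rewrite ltn_subRL => h; exact: h.
rewrite addn0; apply: leq_trans (count_size _ _) _.
by rewrite size_take lti.
Qed.

Definition medT {R : realFieldType} (s : seq R) := sort <=%R s.

Lemma medT_sorted {R : realFieldType} (s : seq R) : sorted <=%R (medT s).
Proof. by apply: sort_sorted; exact: le_total. Qed.

Lemma medT_count {R : realFieldType} (P : pred R) (s : seq R) : count P (medT s) = count P s.
Proof. by apply/permP; rewrite perm_sort. Qed.

Lemma med_up {R : realFieldType} (P : pred R) (Pup : forall x y, x <= y -> P x -> P y) (s : seq R) :
  (size s < 2 * count P s)%N ->
  P (nth 0 (medT s) (size s)./2) /\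
  (~~ odd (size s) -> P (nth 0 (medT s) (size s)./2.-1)).
Proof.
move=> hc.
have hsz : size (medT s) = size s by rewrite size_sort.
have hcnt := medT_count P s.
have hn := odd_double_half (size s).
have hcs := count_size P s.
split.
  apply/negPn/negP => nP.
  have lt1 : ((size s)./2 < size (medT s))%N by rewrite hsz; lia.
  have := @sorted_count_up _ _ P Pup _ (medT_sorted s) lt1 nP.
  rewrite ?hsz hcnt; case: (odd (size s)) hn => /= hn; lia.
move=> ev; apply/negPn/negP => nP.
have lt1 : ((size s)./2.-1 < size (medT s))%N by rewrite hsz; lia.
have := @sorted_count_up _ _ P Pup _ (medT_sorted s) lt1 nP.
rewrite ?hsz hcnt; move: ev; case: (odd (size s)) hn => //= hn _; lia.
Qed.

Lemma med_down {R : realFieldType} (P : pred R) (Pdn : forall x y, x <= y -> P y -> P x) (s : seq R) :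
  (size s < 2 * count P s)%N ->
  P (nth 0 (medT s) (size s)./2) /\
  (~~ odd (size s) -> P (nth 0 (medT s) (size s)./2.-1)).
Proof.
move=> hc.
have hsz : size (medT s) = size s by rewrite size_sort.
have hcnt := medT_count P s.
have hn := odd_double_half (size s).
have hcs := count_size P s.
split.
  apply/negPn/negP => nP.
  have lt1 : ((size s)./2 < size (medT s))%N by rewrite hsz; lia.
  have := @sorted_count_down _ _ P Pdn _ (medT_sorted s) lt1 nP.
  rewrite ?hsz hcnt; case: (odd (size s)) hn => /= hn; lia.
move=> ev; apply/negPn/negP => nP.
have lt1 : ((size s)./2.-1 < size (medT s))%N by rewrite hsz; lia.
have := @sorted_count_down _ _ P Pdn _ (medT_sorted s) lt1 nP.
rewrite ?hsz hcnt; move: ev; case: (odd (size s)) hn => //= hn _; lia.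
Qed.


Lemma median_nth (R : realFieldType) (s : seq R) : (0 < size s)%N ->
  median s = if odd (size s) then nth 0 (medT s) (size s)./2
    else (nth 0 (medT s) (size s)./2.-1 + nth 0 (medT s) (size s)./2) / 2%:R.
Proof.
move=> hs; rewrite /median /= size_sort; case: eqP => [h|_]; last by [].
by rewrite h in hs.
Qed.

Lemma median_pos (R : realFieldType) (s : seq R) :
  (size s < 2 * count (fun x : R => (0 < x)%R) s)%N -> 0 < median s.
Proof.
move=> hc.
have hs : (0 < size s)%N by have := count_size (fun x : R => 0 < x) s; lia.
have [h1 h2] := @med_up R (fun x => 0 < x) (fun x y le lt => lt_le_trans lt le) s hc.
rewrite median_nth //; case: ifP => od //.
have h2' := h2 (negbT od).
by apply: divr_gt0; [apply: addr_gt0 | rewrite ltr0n].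
Qed.

Lemma median_neg (R : realFieldType) (s : seq R) :
  (size s < 2 * count (fun x : R => (x < 0)%R) s)%N -> median s < 0.
Proof.
move=> hc.
have hs : (0 < size s)%N by have := count_size (fun x : R => x < 0) s; lia.
have [h1 h2] := @med_down R (fun x => x < 0) (fun x y le lt => le_lt_trans le lt) s hc.
rewrite median_nth //; case: ifP => od //.
rewrite pmulr_llt0 ?invr_gt0 ?ltr0n //.
have h2' := h2 (negbT od).
by have := ltrD h2' h1; rewrite addr0.
Qed.

Lemma median_zero (R : realFieldType) (s : seq R) :
  (size s < 2 * count (fun x : R => x == 0%R) s)%N -> median s = 0.
Proof.
move=> hc.
have hs : (0 < size s)%N by have := count_size (fun x : R => x == 0%R) s; lia.
have hc1 : (size s < 2 * count (fun x : R => (0 <= x)%R) s)%N.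
  apply: leq_trans hc _; rewrite leq_mul2l /=; apply: sub_count => x /eqP ->.
  by rewrite lexx.
have hc2 : (size s < 2 * count (fun x : R => (x <= 0)%R) s)%N.
  apply: leq_trans hc _; rewrite leq_mul2l /=; apply: sub_count => x /eqP ->.
  by rewrite lexx.
have [h1 h2] := @med_up R (fun x => 0 <= x) (fun x y le lt => le_trans lt le) s hc1.
have [h3 h4] := @med_down R (fun x => x <= 0) (fun x y le lt => le_trans le lt) s hc2.
have e1 : nth 0 (medT s) (size s)./2 = 0 by apply/le_anti; rewrite h1 h3.
rewrite median_nth //; case: ifP => od //.
have e2 : nth 0 (medT s) (size s)./2.-1 = 0.
  by apply/le_anti; rewrite h2 ?h4 ?od.
by rewrite e1 e2 addr0 mul0r.
Qed.

Lemma count_ge (R : realFieldType) (T : finType) (A B : {set T}) (f : T -> R) (P : pred R) :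
  A \subset B -> (forall i, i \in A -> P (f i)) ->
  (#|A| <= count P [seq f i | i <- enum B])%N.
Proof.
move=> sub hP; rewrite count_map -size_filter cardE.
apply: uniq_leq_size (enum_uniq _) _ => x; rewrite mem_enum mem_filter mem_enum => xA.
by rewrite /preim /= hP // (subsetP sub).
Qed.

Lemma sum_pos (R : realFieldType) (d : nat) (Q : 'I_d -> R) (V : {set 'I_d}) i0 :
  (forall i, 0 <= Q i) -> i0 \in V -> 0 < Q i0 -> 0 < \sum_(j in V) Q j.
Proof.
move=> h0 iV qp; rewrite (bigD1 i0) //=.
have h : 0 <= \sum_(j in V | j != i0) Q j by apply: sumr_ge0 => j _.
lra.
Qed.

Lemma key (R : realFieldType) (d : nat) (Q1 Q2 : 'I_d -> R)
    (I0 : {set 'I_d}) (b : R) (b0 : 0 < b)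
    (hb : forall i, i \in I0 -> Q1 i = b * Q2 i)
    (hQ1 : forall i, 0 <= Q1 i) (hQ2 : forall i, 0 <= Q2 i)
    (Q2pos : forall i, i \in I0 -> 0 < Q2 i)
    (hI0diff : forall i, i \notin I0 -> differential Q1 Q2 I0 i)
    (hmaj : (d < 2 * #|I0|)%N) i0 (i0I : i0 \in I0)
    (V : {set 'I_d}) (sub : I0 \subset V) :
  [/\ (forall i, i \in I0 -> i \notin Wset Q1 Q2 V),
      (V != I0 -> Wset Q1 Q2 V != set0) &
      (V = I0 -> Wset Q1 Q2 V = set0)].
Proof.
set S1 := \sum_(j in V) Q1 j; set S2 := \sum_(j in V) Q2 j.
have i0V : i0 \in V by apply: (subsetP sub).
have S2p : 0 < S2 by apply: (sum_pos hQ2 i0V); exact: Q2pos.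
have S1p : 0 < S1 by apply: (sum_pos hQ1 i0V); rewrite hb // mulr_gt0 // Q2pos.
have S1n : S1 != 0 by rewrite gt_eqF.
have S2n : S2 != 0 by rewrite gt_eqF.
set e := b * S2 - S1.
have hR0 : forall i, i \in I0 -> Rval Q1 Q2 V i = Q2 i / (S1 * S2) * e.
  move=> i iI; rewrite /Rval -/S1 -/S2 hb // /e; field.
  by rewrite S1n S2n.
have hsum : \sum_(i in V) Rval Q1 Q2 V i = 0.
  rewrite /Rval -/S1 -/S2 big_split /= sumrN -!mulr_suml -/S1 -/S2.
  by rewrite !divff // subrr.
have hsz : forall P : pred R, (forall i, i \in I0 -> P (Rval Q1 Q2 V i)) ->
    (size [seq Rval Q1 Q2 V i | i <- enum V] < 2 * count P [seq Rval Q1 Q2 V i | i <- enum V])%N.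
  move=> P hP; have := count_ge sub hP.
  rewrite size_map -cardE; have := max_card V; rewrite card_ord => h1 h2.
  by apply: leq_ltn_trans h1 _; apply: leq_trans hmaj _; rewrite leq_mul2l h2 orbT.
have pos_k : forall i, i \in I0 -> 0 < Q2 i / (S1 * S2).
  by move=> i iI; rewrite divr_gt0 ?mulr_gt0 ?Q2pos.
have T2p : 0 < \sum_(j in I0) Q2 j by apply: (sum_pos hQ2 i0I); exact: Q2pos.
have T1e : \sum_(j in I0) Q1 j = b * \sum_(j in I0) Q2 j.
  by rewrite mulr_sumr; apply: eq_bigr => j jI; rewrite hb.
have [eneg|epos|e0] := ltgtP e 0.
- have hM : Mval Q1 Q2 V < 0.
    apply: median_neg; apply: hsz => i iI; rewrite hR0 // pmulr_rlt0 //; exact: pos_k.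
  have WE : Wset Q1 Q2 V = Wplus Q1 Q2 V :|: Wzero Q1 Q2 V.
    by rewrite /Wset (lt_eqF hM) ltNge (ltW hM).
  split.
  + move=> i iI; rewrite WE !inE negb_or !negb_and.
    have : Rval Q1 Q2 V i < 0 by rewrite hR0 // pmulr_rlt0 // pos_k.
    by move=> h; rewrite (lt_gtF h) (lt_eqF h) !orbT.
  + move=> _; apply/set0Pn.
    have [i iV hi] : exists2 i, i \in V & 0 <= Rval Q1 Q2 V i.
      case: (pickP [pred i | (i \in V) && (0 <= Rval Q1 Q2 V i)]) => [i /andP[iV hi]|hn]; first by exists i.
      exfalso.
      have hn' : forall i, i \in V -> Rval Q1 Q2 V i < 0.
        by move=> i iV; have := hn i; rewrite /= iV /= => /negbT; rewrite -ltNge.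
      have : \sum_(i in V) Rval Q1 Q2 V i < 0.
        rewrite (bigD1 i0) //=.
        have h1 : Rval Q1 Q2 V i0 < 0 by rewrite hn'.
        have h2 : \sum_(i in V | i != i0) Rval Q1 Q2 V i <= 0.
          by apply: sumr_le0 => i /andP [iV _]; apply: ltW; rewrite hn'.
        lra.
      by rewrite hsum ltxx.
    exists i; rewrite WE !inE iV /=; move: hi; rewrite le_eqVlt => /orP [/eqP <-|->].
      by rewrite eqxx orbT.
    by [].
  + move=> VI; exfalso; move: eneg; rewrite /e /S1 /S2 VI T1e subrr ltxx //.
- have hM : 0 < Mval Q1 Q2 V.
    apply: median_pos; apply: hsz => i iI; rewrite hR0 // pmulr_rgt0 //; exact: pos_k.
  have WE : Wset Q1 Q2 V = Wminus Q1 Q2 V :|: Wzero Q1 Q2 V.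
    by rewrite /Wset (gt_eqF hM) hM.
  split.
  + move=> i iI; rewrite WE !inE negb_or !negb_and.
    have : 0 < Rval Q1 Q2 V i by rewrite hR0 // pmulr_rgt0 // pos_k.
    by move=> h; rewrite (lt_gtF h) (gt_eqF h) !orbT.
  + move=> _; apply/set0Pn.
    have [i iV hi] : exists2 i, i \in V & Rval Q1 Q2 V i <= 0.
      case: (pickP [pred i | (i \in V) && (Rval Q1 Q2 V i <= 0)]) => [i /andP[iV hi]|hn]; first by exists i.
      exfalso.
      have hn' : forall i, i \in V -> 0 < Rval Q1 Q2 V i.
        by move=> i iV; have := hn i; rewrite /= iV /= => /negbT; rewrite -ltNge.
      have : 0 < \sum_(i in V) Rval Q1 Q2 V i.
        rewrite (bigD1 i0) //=.
        have h1 : 0 < Rval Q1 Q2 V i0 by rewrite hn'.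
        have h2 : 0 <= \sum_(i in V | i != i0) Rval Q1 Q2 V i.
          by apply: sumr_ge0 => i /andP [iV _]; apply: ltW; rewrite hn'.
        lra.
      by rewrite hsum ltxx.
    exists i; rewrite WE !inE iV /=; move: hi; rewrite le_eqVlt => /orP [/eqP ->|->].
      by rewrite eqxx orbT.
    by [].
  + move=> VI; exfalso; move: epos; rewrite /e /S1 /S2 VI T1e subrr ltxx //.
- have hM : Mval Q1 Q2 V = 0.
    apply: median_zero; apply: hsz => i iI; rewrite hR0 // e0 mulr0 //.
  have WE : Wset Q1 Q2 V = Wplus Q1 Q2 V :|: Wminus Q1 Q2 V.
    by rewrite /Wset hM eqxx.
  have Rz : forall i, i \in I0 -> Rval Q1 Q2 V i = 0 by move=> i iI; rewrite hR0 // e0 mulr0.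
  split.
  + move=> i iI; rewrite WE !inE Rz // ltxx; by rewrite !andbF.
  + move=> VnI; apply/set0Pn.
    have [i iV niI] : exists2 i, i \in V & i \notin I0.
      apply/subsetPn; apply: contra VnI => h; by rewrite eqEsubset h sub.
    exists i; rewrite WE !inE iV /=.
    have : Rval Q1 Q2 V i != 0.
      have hd : Q1 i * \sum_(j in I0) Q2 j != Q2 i * (b * \sum_(j in I0) Q2 j).
        have := hI0diff i niI; rewrite /differential T1e.
        have hT : \sum_(j in I0) Q2 j != 0 by rewrite gt_eqF.
        have hbT : b * \sum_(j in I0) Q2 j != 0 by rewrite gt_eqF // mulr_gt0.
        by rewrite eqr_div.
      rewrite /Rval -/S1 -/S2 subr_eq0 eqr_div //; apply: contra hd => /eqP h.
      have eS : S1 = b * S2 by apply/eqP; rewrite eq_sym -subr_eq0; apply/eqP.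
      rewrite eS in h.
      have h' : Q1 i = Q2 i * b.
        apply: (mulIf S2n); by rewrite h mulrA.
      by rewrite h' mulrA.
    by rewrite neq_lt => /orP [->|->]; rewrite ?orbT.
  + move=> VI; apply/setP => i; rewrite WE !inE; case iV: (i \in V) => //=.
    by rewrite Rz ?ltxx // -VI.
Qed.


Unset Implicit Arguments. Set Strict Implicit.

Theorem theorem1 (R : realFieldType) (d : nat) (Q1 Q2 : 'I_d -> R)
    (I0 : {set 'I_d})
    (hQ1 : forall i, 0 <= Q1 i) (hQ2 : forall i, 0 <= Q2 i)
    (hQ : forall i, 0 < Q1 i + Q2 i)
    (hI0ref : reference_set Q1 Q2 I0)
    (hI0max : forall J : {set 'I_d}, reference_set Q1 Q2 J -> (#|J| <= #|I0|)%N)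
    (hI0diff : forall i, i \notin I0 -> differential Q1 Q2 I0 i)
    (hmaj : (d < 2 * #|I0|)%N) :
  let I1 := ~: I0 in
  exists T : nat,
    [/\ Wset Q1 Q2 (UVt Q1 Q2 T).2 = set0,
        (forall t, (t < T)%N -> Wset Q1 Q2 (UVt Q1 Q2 t).2 != set0),
        (T <= #|~: I0| + 1)%N,
        (UVt Q1 Q2 T).2 = I0 &
        (UVt Q1 Q2 T).1 = I1].
Proof.
move=> I1; rewrite {}/I1; case: hI0ref => b b0 hb.
have Q2pos : forall i, i \in I0 -> 0 < Q2 i.
  move=> i iI; have := hQ i; rewrite hb // -{2}(mul1r (Q2 i)) -mulrDl.
  by rewrite pmulr_rgt0 // addr_gt0.
have [i0 i0I] : exists i0, i0 \in I0.
  apply/set0Pn; rewrite -card_gt0; lia.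
have K := key b0 hb hQ1 hQ2 Q2pos hI0diff hmaj i0I.
have UVS : forall t, UVt Q1 Q2 t.+1 =
    ((UVt Q1 Q2 t).1 :|: Wset Q1 Q2 (UVt Q1 Q2 t).2,
     (UVt Q1 Q2 t).2 :\: Wset Q1 Q2 (UVt Q1 Q2 t).2).
  by move=> t; rewrite /UVt iterS.
have inv : forall t, I0 \subset (UVt Q1 Q2 t).2 /\ (UVt Q1 Q2 t).1 = ~: (UVt Q1 Q2 t).2.
  elim=> [|t [IH1 IH2]]; first by rewrite /UVt /= subsetT setCT.
  have [k1 _ _] := K _ IH1.
  rewrite UVS /=; split.
    apply/subsetP => x xI; rewrite inE k1 //=; exact: (subsetP IH1).
  by rewrite IH2 setDE setCI setCK.
have prog : forall t, (UVt Q1 Q2 t).2 = I0 \/ (#|(UVt Q1 Q2 t).2| + t <= d)%N.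
  elim=> [|t IH]; first by right; rewrite /UVt /= cardsT card_ord addn0.
  have [sub _] := inv t; have [_ k2 k3] := K _ sub.
  case: IH => [VI|IH].
    by left; rewrite UVS /= k3 // setD0.
  case: (eqVneq (UVt Q1 Q2 t).2 I0) => [VI|VnI]; first by left; rewrite UVS /= k3 // setD0.
  right; rewrite UVS /= cardsD.
  have Wsub : Wset Q1 Q2 (UVt Q1 Q2 t).2 \subset (UVt Q1 Q2 t).2.
    by rewrite /Wset; case: ifP => _; [|case: ifP => _]; apply/subsetP => x; rewrite !inE => /orP [] /andP [].
  rewrite (setIidPr Wsub).
  have := k2 VnI; rewrite -card_gt0 => hW.
  have := subset_leq_card Wsub; lia.
have hc := cardsC I0; rewrite card_ord in hc.
have VI1 : (UVt Q1 Q2 #|~: I0|).2 == I0.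
  apply/eqP; case: (prog #|~: I0|) => // h.
  have [sub _] := inv #|~: I0|.
  apply/eqP; rewrite eq_sym eqEcard sub /=; by move: h; rewrite -[X in (_ <= X)%N]hc leq_add2r.
have exT : exists t, (UVt Q1 Q2 t).2 == I0 by exists #|~: I0|.
case: (ex_minnP exT) => T /eqP VT Tmin.
exists T; split.
- by have [_ _ k3] := K _ (proj1 (inv T)); apply: k3.
- move=> t ltT; have [sub _] := inv t; have [_ k2 _] := K _ sub; apply: k2.
  apply/negP => /Tmin; lia.
- by apply: leq_trans (leq_addr _ _); apply: Tmin.
- exact: VT.
- by have [_ ->] := inv T; rewrite VT.
Qed.
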